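(* Let $D$ be a directed graph with vertex set $I$ and $A=kD$ its path algebra, and let $r$ be any of $r_b,r_l,r_k,r_j$. Then $r(A)=\mathrm{g.m.}\,r(A)=\sum\{r(A_{ij})\mid i,j\in I\}=kR(D)$.
   Context: $k$ is a field; $D$ may be infinite and have multiple arrows and loops. The path algebra $A=kD=\bigoplus_{i,j\in I}A_{ij}$, where $A_{ij}$ is the $k$-span of paths from $i$ to $j$ of length $\ge1$, plus the trivial path $e_{ii}$ when $i=j$; multiplication is concatenation. A regular path is a path of length $\ge1$ from a vertex $i$ to a vertex $j$ such that there is no path from $j$ to $i$; $R(D)$ is the set of regular paths and $kR(D)$ its $k$-span. $r(A)$ is the ring radical of $A$ ($r_b$ Baer/prime, $r_l$ Levitzki, $r_k$ nil (Köthe), $r_j$ Jacobson). $A_{ij}$ is regarded as a $\Gamma$-ring with $\Gamma=A_{ji}$, and $r(A_{ij})$ is the corresponding $\Gamma$-ring radical (Coppage–Luh). $\mathrm{g.m.}\,r(A)$ is the largest ideal of $A$ of the form $\bigoplus B_{ij}$, $B_{ij}\subseteq A_{ij}$, contained in $r(A)$. *)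

(* Defs.v *)
From HB Require Import structures.
From mathcomp Require Import all_boot all_order all_algebra.
From mathcomp Require Import finmap.
From mathcomp.multinomials Require Import monalg.

Set Implicit Arguments.
Unset Strict Implicit.
Unset Printing Implicit Defensive.

Import GRing.Theory.
Local Open Scope ring_scope.

(* Part 1. Radicals of (possibly non-unital) rings, on a carrier T with an *)
(* explicit multiplication [mul].                                          *)
Section RingRadicals.
Variables (T : zmodType) (mul : T -> T -> T).

Definition rideal (S : T -> Prop) : Prop :=
  [/\ S 0, (forall x y, S x -> S y -> S (x - y)) &
      (forall a x, S x -> S (mul a x) /\ S (mul x a))].

Definition rprime (P : T -> Prop) : Prop :=
  [/\ rideal P, (exists x, ~ P x) &
      (forall U V, rideal U -> rideal V ->
         (forall a b, U a -> V b -> P (mul a b)) ->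
         (forall a, U a -> P a) \/ (forall b, V b -> P b))].

Definition rprod (x0 : T) (l : seq T) : T := foldl mul x0 l.

Definition rnilpotent (x : T) : Prop :=
  exists n, rprod x (nseq n x) = 0.

Definition rnil (S : T -> Prop) : Prop := forall x, S x -> rnilpotent x.

(* every finite subset generates a nilpotent subring *)
Definition rloc_nilpotent (S : T -> Prop) : Prop :=
  forall F : seq T, (forall y, y \in F -> S y) ->
    exists n, forall (x0 : T) (l : seq T), x0 \in F -> size l = n ->
      (forall y, y \in l -> y \in F) -> rprod x0 l = 0.

Definition rrqr (x : T) : Prop := exists y, x + y - mul x y = 0.

Definition rquasi_regular (S : T -> Prop) : Prop := forall x, S x -> rrqr x.

Definition r_b (x : T) : Prop := forall P, rprime P -> P x.
(* Levitzki radical: sum (= union) of all locally nilpotent ideals *)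
Definition r_l (x : T) : Prop :=
  exists S, [/\ rideal S, rloc_nilpotent S & S x].
(* Koethe nil radical: sum (= union) of all nil ideals *)
Definition r_k (x : T) : Prop := exists S, [/\ rideal S, rnil S & S x].
(* Jacobson radical: sum (= union) of all quasi-regular ideals *)
Definition r_j (x : T) : Prop :=
  exists S, [/\ rideal S, rquasi_regular S & S x].

End RingRadicals.

(* Part 2. Radicals of Gamma-rings (Coppage-Luh).  The Gamma-ring M and    *)
(* the set Gamma are given as subsets of a common additive group T, with   *)
(* the ternary product [op : M -> Gamma -> M -> M].                        *)
Section GammaRadicals.
Variables (T : zmodType) (M G : T -> Prop) (op : T -> T -> T -> T).

Definition gideal (S : T -> Prop) : Prop :=
  [/\ (forall x, S x -> M x), S 0, (forall x y, S x -> S y -> S (x - y)) &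
      (forall a g x, M a -> G g -> S x -> S (op a g x) /\ S (op x g a))].

Definition gprime (P : T -> Prop) : Prop :=
  [/\ gideal P, (exists x, M x /\ ~ P x) &
      (forall U V, gideal U -> gideal V ->
         (forall a g b, U a -> G g -> V b -> P (op a g b)) ->
         (forall a, U a -> P a) \/ (forall b, V b -> P b))].

(* x0 g1 x1 g2 x2 ... gn xn  for l = [:: (g1,x1); ...; (gn,xn)] *)
Definition gprod (x0 : T) (l : seq (T * T)) : T :=
  foldl (fun acc gx => op acc gx.1 gx.2) x0 l.

Definition gnilpotent (x : T) : Prop :=
  exists n, forall gs : seq T, size gs = n -> (forall g, g \in gs -> G g) ->
    gprod x [seq (g, x) | g <- gs] = 0.

Definition gnil (S : T -> Prop) : Prop := forall x, S x -> gnilpotent x.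

Definition gloc_nilpotent (S : T -> Prop) : Prop :=
  forall F Phi : seq T, (forall y, y \in F -> S y) ->
    (forall g, g \in Phi -> G g) ->
    exists n, forall (x0 : T) (l : seq (T * T)), x0 \in F -> size l = n ->
      (forall gx, gx \in l -> (gx.1 \in Phi) && (gx.2 \in F)) ->
      gprod x0 l = 0.

(* right quasi-regular element of a Gamma-ring: for every gamma in Gamma,
   x is right quasi-regular in the ring (M, (a,b) |-> a gamma b) *)
Definition grqr (x : T) : Prop :=
  forall g, G g -> exists y, M y /\ x + y - op x g y = 0.

Definition gquasi_regular (S : T -> Prop) : Prop := forall x, S x -> grqr x.

Definition gr_b (x : T) : Prop := M x /\ forall P, gprime P -> P x.
Definition gr_l (x : T) : Prop :=
  exists S, [/\ gideal S, gloc_nilpotent S & S x].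
Definition gr_k (x : T) : Prop := exists S, [/\ gideal S, gnil S & S x].
Definition gr_j (x : T) : Prop :=
  exists S, [/\ gideal S, gquasi_regular S & S x].

End GammaRadicals.

Inductive radkind := Baer | Levitzki | Koethe | Jacobson.

Definition ring_radical (r : radkind) (T : zmodType) (mul : T -> T -> T) :
    T -> Prop :=
  match r with
  | Baer => r_b mul | Levitzki => r_l mul
  | Koethe => r_k mul | Jacobson => r_j mul
  end.

Definition gamma_radical (r : radkind) (T : zmodType) (M G : T -> Prop)
    (op : T -> T -> T -> T) : T -> Prop :=
  match r with
  | Baer => gr_b M G op | Levitzki => gr_l M G op
  | Koethe => gr_k M G op | Jacobson => gr_j M G op
  end.

(* A quiver D: vertex type I, arrow type Ar (both arbitrary, possibly      *)
(* infinite), source and target maps.  A path is a start vertex together   *)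
(* with a composable list of arrows (empty list = trivial path e_ii).      *)
Section PathAlgebra.
Variables (k : fieldType) (I Ar : choiceType) (src tgt : Ar -> I).

Definition path_ok (p : I * seq Ar) : bool :=
  if p.2 is a :: s then (src a == p.1) && path (fun b c => tgt b == src c) a s
  else true.

Definition qpath := {p : I * seq Ar | path_ok p}.

Definition pstart (p : qpath) : I := (val p).1.
Definition pend (p : qpath) : I :=
  if (val p).2 is a :: s then tgt (last a s) else (val p).1.
Definition plength (p : qpath) : nat := size (val p).2.

(* concatenation  p then q  (meaningful when pend p = pstart q) *)
Definition pcat (p q : qpath) : qpath :=
  insubd p ((val p).1, (val p).2 ++ (val q).2).

Definition pathalg := {malg k[qpath]}.

Definition pbasis_mul (p q : qpath) : pathalg :=
  if pend p == pstart q then << pcat p q >> else 0.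

Definition pmul (f g : pathalg) : pathalg :=
  \sum_(p <- msupp f) \sum_(q <- msupp g) (f@_p * g@_q) *: pbasis_mul p q.

Definition inA (i j : I) (x : pathalg) : Prop :=
  forall p, p \in msupp x -> pstart p = i /\ pend p = j.

Definition comp (i j : I) (x : pathalg) : pathalg :=
  \sum_(p <- msupp x | (pstart p == i) && (pend p == j)) x@_p *: << p >>.

(* A_ij as a Gamma-ring with Gamma = A_ji, product  a g b = a * g * b *)
Definition gop (a g b : pathalg) : pathalg := pmul (pmul a g) b.

Definition regular_path (p : qpath) : Prop :=
  (0 < plength p)%N /\ ~ (exists q : qpath, pstart q = pend p /\ pend q = pstart p).

Definition kR (x : pathalg) : Prop :=
  forall p, p \in msupp x -> regular_path p.

(* ideals of A of the form (+)_{ij} B_ij with B_ij <= A_ij *)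
Definition graded_ideal (B : pathalg -> Prop) : Prop :=
  rideal pmul B /\ forall x i j, B x -> B (comp i j x).

(* g.m. r(A): the largest graded ideal contained in r(A), taken as the
   union (= sum) of all graded ideals contained in r(A) *)
Definition gm (R : pathalg -> Prop) (x : pathalg) : Prop :=
  exists B, [/\ graded_ideal B, (forall y, B y -> R y) & B x].

Definition radA (r : radkind) : pathalg -> Prop := ring_radical r pmul.

Definition radAij (r : radkind) (i j : I) : pathalg -> Prop :=
  gamma_radical r (inA i j) (inA j i) gop.

Definition sum_radAij (r : radkind) (x : pathalg) : Prop :=
  exists s : seq (I * I * pathalg),
    (forall t, t \in s -> radAij r t.1.1 t.1.2 t.2) /\
    x = \sum_(t <- s) t.2.

End PathAlgebra.

(* Main.v *)
Require Import Defs.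
From mathcomp Require Import all_boot all_order all_algebra.
From mathcomp Require Import finmap.
From mathcomp.multinomials Require Import monalg.
From Stdlib Require Import Classical.
From mathcomp Require Import zify.

Set Implicit Arguments.
Unset Strict Implicit.
Unset Printing Implicit Defensive.

Import GRing.Theory.
Local Open Scope ring_scope.


Lemma scaleU (K : choiceType) (R : nzRingType) (c : R) (t : K) :
  c *: (<< t >> : {malg R[K]}) = << c *g t >>.
Proof.
apply/malgP => r; rewrite mcoeffZ !mcoeffU.
by case: (t == r); rewrite ?mulr1 ?mulr0.
Qed.

Lemma sum_coef (K : choiceType) (R : nzRingType) (a : {malg R[K]}) (p0 : K) :
  \sum_(p <- msupp a) a@_p * (p == p0)%:R = a@_p0.
Proof.
transitivity ((\sum_(p <- msupp a) << a@_p *g p >>)@_p0); last by rewrite -monalgE.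
rewrite raddf_sum /=; apply: eq_bigr => p _.
by rewrite mcoeffU mulr_natr.
Qed.

Lemma argmax (T : eqType) (s : seq T) (P : T -> Prop) (f : T -> nat) :
  (exists2 x, x \in s & P x) ->
  exists x, [/\ x \in s, P x & forall y, y \in s -> P y -> (f y <= f x)%N].
Proof.
elim: s => [[x]//|a s ih [x]]; rewrite inE => /orP [/eqP -> Pa|xs Px].
  case: (classic (exists2 x, x \in s & P x)) => [/ih [y [ys Py my]]|nx].
    case: (leqP (f a) (f y)) => h.
      exists y; split; [by rewrite inE ys orbT | done|].
      by move=> z; rewrite inE => /orP [/eqP ->|/my]. 
    exists a; split; [by rewrite inE eqxx|done|].
    move=> z; rewrite inE => /orP [/eqP ->|zs Pz] //.
    by apply: leq_trans (my _ zs Pz) (ltnW h).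
  exists a; split; [by rewrite inE eqxx|done|].
  move=> z; rewrite inE => /orP [/eqP ->|zs Pz] //.
  by exfalso; apply: nx; exists z.
have [y [ys Py my]] := ih (ex_intro2 _ _ x xs Px).
case: (classic (P a)) => Pa.
  case: (leqP (f a) (f y)) => h.
    exists y; split; [by rewrite inE ys orbT | done|].
    by move=> z; rewrite inE => /orP [/eqP ->|/my].
  exists a; split; [by rewrite inE eqxx|done|].
  move=> z; rewrite inE => /orP [/eqP ->|zs Pz] //.
  by apply: leq_trans (my _ zs Pz) (ltnW h).
exists y; split; [by rewrite inE ys orbT | done|].
by move=> z; rewrite inE => /orP [/eqP ->|/my] //.
Qed.

Lemma zid (V : zmodType) (y s0 s1 a b : V) : y - s0 + s1 = a ->
  y - (s0 + a) + (s1 + b) = b.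
Proof.
move=> <-.
by rewrite !opprD !addrA subrK opprK (addrAC y (- s0) (- y)) subrr add0r addNr add0r.
Qed.

Section PA.
Variables (k : fieldType) (I Ar : choiceType) (src tgt : Ar -> I).

Local Notation qpath := (qpath src tgt).
Local Notation pstart := (@pstart I Ar src tgt).
Local Notation pend := (@pend I Ar src tgt).
Local Notation plength := (@plength I Ar src tgt).
Local Notation pcat := (@pcat I Ar src tgt).
Local Notation A := (pathalg k src tgt).
Local Notation pmul := (@pmul k I Ar src tgt).
Local Notation pbasis_mul := (@pbasis_mul k I Ar src tgt).

Lemma pend_val (p : qpath) : pend p =
  if (val p).2 is a :: s then tgt (last a s) else (val p).1.
Proof. by []. Qed.

Lemma pcat_ok (p q : qpath) : pend p = pstart q ->
  path_ok src tgt ((val p).1, (val p).2 ++ (val q).2).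
Proof.
case: p => [[i s] /= okp]; case: q => [[j t] /= okq].
rewrite /pend /pstart /= => e.
case: s okp e => [|a s] /= okp e.
  by subst j.
move/andP: okp => [sa pth] /=; rewrite /= in sa. idtac.
rewrite /path_ok /= sa cat_path pth /=.
by case: t okq => [|b t] //= /andP [/eqP sb ->]; rewrite andbT sb -e.
Qed.

Lemma pcat_val (p q : qpath) : pend p = pstart q ->
  val (pcat p q) = ((val p).1, (val p).2 ++ (val q).2).
Proof. by move=> e; rewrite /pcat insubdK //; exact: pcat_ok. Qed.

Lemma pstart_cat (p q : qpath) : pend p = pstart q -> pstart (pcat p q) = pstart p.
Proof. by move=> e; rewrite /pstart pcat_val. Qed.

Lemma plength_cat (p q : qpath) : pend p = pstart q ->
  plength (pcat p q) = (plength p + plength q)%N.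
Proof. by move=> e; rewrite /plength pcat_val // size_cat. Qed.

Lemma pend_cat (p q : qpath) : pend p = pstart q -> pend (pcat p q) = pend q.
Proof.
move=> e; rewrite /pend pcat_val //=.
case: q e => [[j t] /= okq]; rewrite /pstart /= => e.
case: t okq => [|b t] _ /=.
  by rewrite cats0 -e.
by case: (val p).2 => [|a s] //=; rewrite last_cat.
Qed.

Lemma pcat_assoc (p q s : qpath) : pend p = pstart q -> pend q = pstart s ->
  pcat (pcat p q) s = pcat p (pcat q s).
Proof.
move=> e1 e2; apply: val_inj.
rewrite pcat_val; last by rewrite pend_cat.
rewrite (@pcat_val p (pcat q s)); last by rewrite pstart_cat.
by rewrite !pcat_val //= catA.
Qed.

Lemma pcat_inj (p q p' q' : qpath) : pend p = pstart q -> pend p' = pstart q' ->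
  plength p = plength p' -> pcat p q = pcat p' q' -> p = p' /\ q = q'.
Proof.
move=> e e' l /(congr1 val); rewrite !pcat_val // => -[h1 h2].
have h3 : (val p).2 = (val p').2.
  have /(congr1 (take (plength p))) := h2.
  by rewrite take_size_cat // l take_size_cat.
have ep : p = p'.
  by apply: val_inj; rewrite [val p]surjective_pairing [val p']surjective_pairing h1 h3.
split=> //; subst p'.
have h4 : (val q).2 = (val q').2.
  have /(congr1 (drop (plength p))) := h2.
  by rewrite drop_size_cat // drop_size_cat.
apply: val_inj; rewrite [val q]surjective_pairing [val q']surjective_pairing h4.
by move: e e'; rewrite /pstart => <- <-.
Qed.

Definition triv (i : I) : qpath := exist _ (i, [::]) isT.

Lemma pstart_triv i : pstart (triv i) = i. Proof. by []. Qed.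
Lemma pend_triv i : pend (triv i) = i. Proof. by []. Qed.
Lemma plength_triv i : plength (triv i) = 0%N. Proof. by []. Qed.

Lemma plength0 (p : qpath) : plength p = 0%N -> p = triv (pstart p).
Proof.
move=> h; apply: val_inj; rewrite [val p]surjective_pairing /=.
by move: h; rewrite /plength; case: (val p).2.
Qed.

Lemma pcat_triv_l (p : qpath) : pcat (triv (pstart p)) p = p.
Proof. by apply: val_inj; rewrite pcat_val //= -surjective_pairing. Qed.

Lemma pcat_triv_r (p : qpath) : pcat p (triv (pend p)) = p.
Proof. by apply: val_inj; rewrite pcat_val // cats0 -surjective_pairing. Qed.


Lemma pmulE (f g : A) : pmul f g =
  \sum_(p <- msupp f) \sum_(q <- msupp g) (f@_p * g@_q) *: pbasis_mul p q.
Proof. by []. Qed.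

Opaque Defs.pmul.

Lemma pmulE_w (f g : A) (D1 D2 : {fset qpath}) :
  (msupp f `<=` D1)%fset -> (msupp g `<=` D2)%fset ->
  pmul f g = \sum_(p <- D1) \sum_(q <- D2) (f@_p * g@_q) *: pbasis_mul p q.
Proof.
move=> le1 le2; rewrite pmulE (big_fset_incl _ le1) /=.
  apply/eq_bigr=> p _; apply/big_fset_incl => // q _ /mcoeff_outdom ->.
  by rewrite mulr0 scale0r.
move=> p _ /mcoeff_outdom fp.
by rewrite big1 => // q _; rewrite fp mul0r scale0r.
Qed.

Lemma pmul0l (g : A) : pmul 0 g = 0.
Proof. by rewrite pmulE msupp0 big_seq_fset0. Qed.

Lemma pmul0r (f : A) : pmul f 0 = 0.
Proof. by rewrite pmulE msupp0 big1 // => p _; rewrite big_seq_fset0. Qed.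

Lemma pmulDl (f h g : A) : pmul (f + h) g = pmul f g + pmul h g.
Proof.
pose D := (msupp f `|` msupp h)%fset.
have l1 : (msupp f `<=` D)%fset by rewrite fsubsetUl.
have l2 : (msupp h `<=` D)%fset by rewrite fsubsetUr.
rewrite (pmulE_w (msuppD_le f h) (fsubset_refl _)) (pmulE_w l1 (fsubset_refl _)).
rewrite (pmulE_w l2 (fsubset_refl _)) -big_split /=.
apply: eq_bigr => p _; rewrite -big_split; apply: eq_bigr => q _ /=.
by rewrite mcoeffD mulrDl scalerDl.
Qed.

Lemma pmulDr (f g h : A) : pmul f (g + h) = pmul f g + pmul f h.
Proof.
pose D := (msupp g `|` msupp h)%fset.
have l1 : (msupp g `<=` D)%fset by rewrite fsubsetUl.
have l2 : (msupp h `<=` D)%fset by rewrite fsubsetUr.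
rewrite (pmulE_w (fsubset_refl _) (msuppD_le g h)) (pmulE_w (fsubset_refl _) l1).
rewrite (pmulE_w (fsubset_refl _) l2) -big_split /=.
apply: eq_bigr => p _; rewrite -big_split; apply: eq_bigr => q _ /=.
by rewrite mcoeffD mulrDr scalerDl.
Qed.

Lemma pmulZl (c : k) (f g : A) : pmul (c *: f) g = c *: pmul f g.
Proof.
rewrite (pmulE_w (msuppZ_le c f) (fsubset_refl _)) pmulE scaler_sumr.
apply: eq_bigr => p _; rewrite scaler_sumr; apply: eq_bigr => q _.
by rewrite mcoeffZ scalerA mulrA.
Qed.

Lemma pmulZr (c : k) (f g : A) : pmul f (c *: g) = c *: pmul f g.
Proof.
rewrite (pmulE_w (fsubset_refl _) (msuppZ_le c g)) pmulE scaler_sumr.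
apply: eq_bigr => p _; rewrite scaler_sumr; apply: eq_bigr => q _.
by rewrite mcoeffZ scalerA mulrCA.
Qed.

Lemma pmulNl (f g : A) : pmul (- f) g = - pmul f g.
Proof. by rewrite -scaleN1r pmulZl scaleN1r. Qed.
Lemma pmulNr (f g : A) : pmul f (- g) = - pmul f g.
Proof. by rewrite -scaleN1r pmulZr scaleN1r. Qed.
Lemma pmulBl (f h g : A) : pmul (f - h) g = pmul f g - pmul h g.
Proof. by rewrite pmulDl pmulNl. Qed.
Lemma pmulBr (f g h : A) : pmul f (g - h) = pmul f g - pmul f h.
Proof. by rewrite pmulDr pmulNr. Qed.

Lemma pmul_suml (T : Type) (s : seq T) (F : T -> A) g :
  pmul (\sum_(i <- s) F i) g = \sum_(i <- s) pmul (F i) g.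
Proof.
elim: s => [|a s ih]; first by rewrite !big_nil pmul0l.
by rewrite !big_cons pmulDl ih.
Qed.

Lemma pmul_sumr (T : Type) (s : seq T) (F : T -> A) f :
  pmul f (\sum_(i <- s) F i) = \sum_(i <- s) pmul f (F i).
Proof.
elim: s => [|a s ih]; first by rewrite !big_nil pmul0r.
by rewrite !big_cons pmulDr ih.
Qed.

Lemma pbasisE (p q r : qpath) :
  (pbasis_mul p q)@_r = ((pend p == pstart q) && (pcat p q == r))%:R.
Proof.
rewrite /Defs.pbasis_mul; case: eqP => _ /=; last by rewrite mcoeff0.
by rewrite mcoeffU; case: eqP.
Qed.

Lemma mcoeff_pmul (f g : A) r : (pmul f g)@_r =
  \sum_(p <- msupp f) \sum_(q <- msupp g)
     (f@_p * g@_q) * ((pend p == pstart q) && (pcat p q == r))%:R.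
Proof.
rewrite pmulE raddf_sum; apply: eq_bigr => p _.
rewrite raddf_sum; apply: eq_bigr => q _.
by rewrite /= mcoeffZ pbasisE.
Qed.

Lemma msupp_pmul (f g : A) r : r \in msupp (pmul f g) ->
  exists p q, [/\ p \in msupp f, q \in msupp g, pend p = pstart q & r = pcat p q].
Proof.
rewrite -mcoeff_neq0 mcoeff_pmul => /eqP nz.
apply: NNPP => hn; apply: nz.
apply: big1_seq => p /andP [_ pf]; apply: big1_seq => q /andP [_ qg].
case: eqP => [e|]; last by rewrite mulr0.
case: eqP => [e'|]; last by rewrite mulr0.
by exfalso; apply: hn; exists p, q.
Qed.

Lemma pmulU (a b : k) (p q : qpath) :
  pmul << a *g p >> << b *g q >> =
  if pend p == pstart q then << (a * b) *g pcat p q >> else 0.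
Proof.
have l1 := @msuppU_le _ _ p a; have l2 := @msuppU_le _ _ q b.
rewrite (pmulE_w l1 l2) !big_seq_fset1 !mcoeffUU /Defs.pbasis_mul.
case: eqP => _; last by rewrite scaler0.
by rewrite scaleU.
Qed.

Lemma pm_spec : {f : A -> A -> A | f = pmul}.
Proof. by exists pmul. Qed.
Definition pm := proj1_sig pm_spec.
Lemma pmE : pmul = pm. Proof. by rewrite /pm; case: pm_spec. Qed.

Lemma B_spec : {f : k -> qpath -> A | forall c p, f c p = << c *g p >>}.
Proof. by exists (fun c p => << c *g p >>). Qed.
Definition B := proj1_sig B_spec.
Lemma BE c p : B c p = << c *g p >>. Proof. by rewrite /B; case: B_spec. Qed.

Lemma mcoeffB c p r : (B c p)@_r = c *+ (p == r).
Proof. by rewrite BE mcoeffU. Qed.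
Lemma msuppB c p : (msupp (B c p) `<=` [fset p])%fset.
Proof. by rewrite BE msuppU_le. Qed.
Lemma B0 p : B 0 p = 0. Proof. by rewrite BE monalgU0. Qed.
Lemma malgBE (f : A) : f = \sum_(p <- msupp f) B f@_p p.
Proof. by rewrite {1}[f]monalgE; apply: eq_bigr => p _; rewrite BE. Qed.

Lemma pm0l g : pm 0 g = 0. Proof. by rewrite -pmE pmul0l. Qed.
Lemma pm0r f : pm f 0 = 0. Proof. by rewrite -pmE pmul0r. Qed.
Lemma pmDl f h g : pm (f + h) g = pm f g + pm h g. Proof. by rewrite -pmE pmulDl. Qed.
Lemma pmDr f g h : pm f (g + h) = pm f g + pm f h. Proof. by rewrite -pmE pmulDr. Qed.
Lemma pmZl c f g : pm (c *: f) g = c *: pm f g. Proof. by rewrite -pmE pmulZl. Qed.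
Lemma pmZr c f g : pm f (c *: g) = c *: pm f g. Proof. by rewrite -pmE pmulZr. Qed.
Lemma pmNl f g : pm (- f) g = - pm f g. Proof. by rewrite -pmE pmulNl. Qed.
Lemma pmNr f g : pm f (- g) = - pm f g. Proof. by rewrite -pmE pmulNr. Qed.
Lemma pmBl f h g : pm (f - h) g = pm f g - pm h g. Proof. by rewrite -pmE pmulBl. Qed.
Lemma pmBr f g h : pm f (g - h) = pm f g - pm f h. Proof. by rewrite -pmE pmulBr. Qed.
Lemma pm_suml (T : Type) (s : seq T) (F : T -> A) g :
  pm (\sum_(i <- s) F i) g = \sum_(i <- s) pm (F i) g.
Proof. by rewrite -pmE pmul_suml. Qed.
Lemma pm_sumr (T : Type) (s : seq T) (F : T -> A) f :
  pm f (\sum_(i <- s) F i) = \sum_(i <- s) pm f (F i).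
Proof. by rewrite -pmE pmul_sumr. Qed.
Lemma mcoeff_pm (f g : A) r : (pm f g)@_r =
  \sum_(p <- msupp f) \sum_(q <- msupp g)
     (f@_p * g@_q) * ((pend p == pstart q) && (pcat p q == r))%:R.
Proof. by rewrite -pmE mcoeff_pmul. Qed.
Lemma msupp_pm (f g : A) r : r \in msupp (pm f g) ->
  exists p q, [/\ p \in msupp f, q \in msupp g, pend p = pstart q & r = pcat p q].
Proof. by rewrite -pmE; apply: msupp_pmul. Qed.
Lemma pmB (a b : k) (p q : qpath) :
  pm (B a p) (B b q) = if pend p == pstart q then B (a * b) (pcat p q) else 0.
Proof. by rewrite -pmE !BE pmulU. Qed.

Lemma pmB_assoc (a b c : k) (p q s : qpath) :
  pm (pm (B a p) (B b q)) (B c s) = pm (B a p) (pm (B b q) (B c s)).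
Proof.
rewrite (pmB a b p q) (pmB b c q s).
case: (eqVneq (pend p) (pstart q)) => e1; case: (eqVneq (pend q) (pstart s)) => e2.
- rewrite (pmB (a * b) c (pcat p q) s) (pmB a (b * c) p (pcat q s)).
  by rewrite pend_cat // pstart_cat // e1 e2 !eqxx pcat_assoc // mulrA.
- rewrite pm0r (pmB (a * b) c (pcat p q) s) pend_cat //.
  by rewrite (negbTE e2).
- rewrite pm0l (pmB a (b * c) p (pcat q s)) pstart_cat //.
  by rewrite (negbTE e1).
- by rewrite pm0l pm0r.
Qed.

Lemma pm_assoc (f g h : A) : pm (pm f g) h = pm f (pm g h).
Proof.
rewrite [f]malgBE [g]malgBE [h]malgBE.
transitivity (\sum_(p <- msupp f) \sum_(q <- msupp g) \sum_(s <- msupp h)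
   pm (pm (B f@_p p) (B g@_q q)) (B h@_s s)).
  rewrite pm_suml pm_suml; apply: eq_bigr => p _.
  rewrite [pm (B _ p) _]pm_sumr pm_suml; apply: eq_bigr => q _.
  by rewrite pm_sumr.
rewrite pm_suml; apply: eq_bigr => p _.
rewrite pm_suml pm_sumr; apply: eq_bigr => q _.
rewrite pm_sumr pm_sumr; apply: eq_bigr => s _.
exact: pmB_assoc.
Qed.

Definition startsAt (a : A) i := forall p, p \in msupp a -> pstart p = i.
Definition endsAt (a : A) j := forall p, p \in msupp a -> pend p = j.

Lemma in_msuppB c s q : q \in msupp (B c s) -> q = s.
Proof. by move/(fsubsetP (msuppB c s)); rewrite in_fset1 => /eqP. Qed.

Lemma nz_msupp (a : A) : a != 0 -> exists p, p \in msupp a.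
Proof.
move=> an; apply: NNPP => h; move/eqP: an; apply.
rewrite [a]malgBE; apply: big1_seq => p /andP [_ pa].
by exfalso; apply: h; exists p.
Qed.

Lemma KEY (a b : A) p0 q0 : pend p0 = pstart q0 ->
  (forall p q, p \in msupp a -> q \in msupp b -> pend p = pstart q ->
     pcat p q = pcat p0 q0 -> (plength p <= plength p0)%N /\ (plength q <= plength q0)%N) ->
  (pm a b)@_(pcat p0 q0) = a@_p0 * b@_q0.
Proof.
move=> e bd; rewrite mcoeff_pm.
transitivity (\sum_(p <- msupp a) \sum_(q <- msupp b)
   ((a@_p * (p == p0)%:R) * (b@_q * (q == q0)%:R))).
  apply: eq_big_seq => p pa; apply: eq_big_seq => q qb.
  have -> : ((pend p == pstart q) && (pcat p q == pcat p0 q0)) = (p == p0) && (q == q0).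
    apply/idP/idP; last by case/andP => /eqP -> /eqP ->; rewrite e !eqxx.
    case/andP => /eqP e1 /eqP e2; have [l1 l2] := bd p q pa qb e1 e2.
    have := congr1 plength e2; rewrite !plength_cat // => el.
    have ll : plength p = plength p0 by apply/eqP; rewrite eqn_leq l1 /=; lia.
    by have [-> ->] := pcat_inj e1 e ll e2; rewrite !eqxx.
  by rewrite -mulnb natrM mulrACA.
transitivity ((\sum_(p <- msupp a) a@_p * (p == p0)%:R) *
              (\sum_(q <- msupp b) b@_q * (q == q0)%:R)).
  by rewrite big_distrl; apply: eq_bigr => p _; rewrite big_distrr.
by rewrite !sum_coef.
Qed.

Lemma COEFF_R (y : A) (c : k) (p s : qpath) : pend p = pstart s ->
  (pm y (B c s))@_(pcat p s) = y@_p * c.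
Proof.
move=> e; rewrite KEY //; first by rewrite mcoeffB eqxx mulr1n.
move=> p' q' _ /in_msuppB -> e' ec; split=> //.
have := congr1 plength ec; rewrite !plength_cat // => el; lia.
Qed.

Lemma COEFF_L (c : k) (s p : qpath) (y : A) : pend s = pstart p ->
  (pm (B c s) y)@_(pcat s p) = c * y@_p.
Proof.
move=> e; rewrite KEY //; first by rewrite mcoeffB eqxx mulr1n.
move=> p' q' /in_msuppB -> _ e' ec; split=> //.
have := congr1 plength ec; rewrite !plength_cat // => el; lia.
Qed.

Lemma starts_pm (a b : A) i : startsAt a i -> startsAt (pm a b) i.
Proof.
move=> h r /msupp_pm [p [q [pa _ e ->]]]; rewrite pstart_cat //; exact: h.
Qed.

Lemma ends_pm (a b : A) j : endsAt b j -> endsAt (pm a b) j.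
Proof.
move=> h r /msupp_pm [p [q [_ qb e ->]]]; rewrite pend_cat //; exact: h.
Qed.

Lemma startsB c p : startsAt (B c p) (pstart p).
Proof. by move=> q /in_msuppB ->. Qed.
Lemma endsB c p : endsAt (B c p) (pend p).
Proof. by move=> q /in_msuppB ->. Qed.

Lemma B_neq0 c p : c != 0 -> B c p != 0.
Proof.
move=> cn; apply/eqP => /(congr1 (mcoeff p)); rewrite mcoeffB eqxx mcoeff0 mulr1n.
by move/eqP: cn.
Qed.

Lemma TWO (a b : A) v : a != 0 -> b != 0 -> endsAt a v -> startsAt b v ->
  pm a b != 0.
Proof.
move=> an bn ea sb.
have [x xa] := nz_msupp an; have [y yb] := nz_msupp bn.
have [p0 [pa _ mp]] := @argmax _ (msupp a) (fun _ => True) plength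
  (ex_intro2 _ _ x xa Logic.I).
have [q0 [qb _ mq]] := @argmax _ (msupp b) (fun _ => True) plength
  (ex_intro2 _ _ y yb Logic.I).
have e : pend p0 = pstart q0 by rewrite ea // sb.
apply/eqP => /(congr1 (mcoeff (pcat p0 q0))); rewrite KEY //; last first.
  by move=> p q pa' qb' _ _; split; [apply: mp|apply: mq].
rewrite mcoeff0; apply/eqP; rewrite mulf_neq0 // mcoeff_neq0 //.
Qed.

Local Notation kR := (@Defs.kR k I Ar src tgt).
Definition reach u v := exists q : qpath, pstart q = u /\ pend q = v.

Lemma reach_refl u : reach u u.
Proof. by exists (triv u). Qed.

Lemma reach_trans u v w : reach u v -> reach v w -> reach u w.
Proof.
move=> [p [<- e1]] [q [e2 <-]]; exists (pcat p q).
by rewrite pstart_cat ?pend_cat // e1 e2.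
Qed.

Lemma reachP (p : qpath) : reach (pstart p) (pend p).
Proof. by exists p. Qed.

Lemma nonreg (p : qpath) : ~ regular_path p -> reach (pend p) (pstart p).
Proof.
rewrite /regular_path => h; case: (posnP (plength p)) => [/plength0 e|lp].
  by rewrite e; apply: reach_refl.
by apply: NNPP => hr; apply: h; split.
Qed.

Lemma reg_catl (p q : qpath) : regular_path p -> pend p = pstart q ->
  regular_path (pcat p q).
Proof.
move=> [lp np] e; split; first by rewrite plength_cat // ltn_addr.
move=> hq; apply: np; apply: (@reach_trans _ (pend q)); first by rewrite e; apply: reachP.
by move: hq; rewrite pend_cat // pstart_cat.
Qed.

Lemma reg_catr (p q : qpath) : regular_path q -> pend p = pstart q ->
  regular_path (pcat p q).
Proof.
move=> [lq nq] e; split; first by rewrite plength_cat // ltn_addl.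
move=> hq; apply: nq; apply: (@reach_trans _ (pstart p)).
  by move: hq; rewrite pend_cat // pstart_cat.
by rewrite -e; apply: reachP.
Qed.

Lemma kR0 : kR (0 : A).
Proof. by move=> p; rewrite msupp0. Qed.

Lemma kRB (x y : A) : kR x -> kR y -> kR (x - y).
Proof.
move=> hx hy p /(fsubsetP (msuppB_le x y)); rewrite in_fsetU => /orP [];
  [exact: hx | exact: hy].
Qed.

Lemma kRD (x y : A) : kR x -> kR y -> kR (x + y).
Proof.
move=> hx hy p /(fsubsetP (msuppD_le x y)); rewrite in_fsetU => /orP [];
  [exact: hx | exact: hy].
Qed.

Lemma kR_sum (T : eqType) (s : seq T) (F : T -> A) :
  (forall t, t \in s -> kR (F t)) -> kR (\sum_(t <- s) F t).
Proof.
elim: s => [|a s ih] h; first by rewrite big_nil; apply: kR0.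
rewrite big_cons; apply: kRD; first by apply: h; rewrite inE eqxx.
by apply: ih => t ts; apply: h; rewrite inE ts orbT.
Qed.

Lemma kR_pml (a x : A) : kR x -> kR (pm a x).
Proof.
move=> hx r /msupp_pm [p [q [_ qx e ->]]]; apply: reg_catr => //; exact: hx.
Qed.

Lemma kR_pmr (a x : A) : kR x -> kR (pm x a).
Proof.
move=> hx r /msupp_pm [p [q [px _ e ->]]]; apply: reg_catl => //; exact: hx.
Qed.

Lemma kR_ideal : rideal pm kR.
Proof.
split; [exact: kR0 | exact: kRB | move=> a x hx; split].
  exact: kR_pml.
exact: kR_pmr.
Qed.

Lemma msupp_comp (i j : I) (x : A) r : r \in msupp (Defs.comp i j x) -> r \in msupp x.
Proof.
apply: contraTT => rn; rewrite -mcoeff_eq0 /Defs.comp raddf_sum /=.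
apply/eqP; apply: big1_seq => p /andP [_ px].
rewrite -BE mcoeffZ mcoeffB.
have /negbTE -> : p != r by apply: contraNneq rn => <-.
by rewrite mulr0n mulr0.
Qed.

Lemma kR_comp (i j : I) (x : A) : kR x -> kR (Defs.comp i j x).
Proof. by move=> hx r /msupp_comp; apply: hx. Qed.

Lemma coef_triv (z y : A) i :
  (pm z y)@_(triv i) = z@_(triv i) * y@_(triv i).
Proof.
have e : pcat (triv i) (triv i) = triv i by exact: (pcat_triv_l (triv i)).
rewrite -{1}e KEY // => p q _ _ epq epc; rewrite e in epc; have := congr1 plength epc.
by rewrite plength_cat // plength_triv => h; split; lia.
Qed.

Lemma Glem (z y : A) i : startsAt z i -> endsAt z i -> z + y - pm z y = 0 ->
  (forall r, r \in msupp z -> plength r = 0%N) /\ z@_(triv i) != 1.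
Proof.
move=> sz ez /eqP; rewrite subr_eq0 => /eqP E.
have Eq r : z@_r + y@_r = (pm z y)@_r by rewrite -E mcoeffD.
set e := triv i.
have c1 : z@_e != 1.
  apply/eqP => z1; have := Eq e; rewrite coef_triv z1 mul1r => /eqP.
  by rewrite -subr_eq0 addrK oner_eq0.
split=> //; move=> r1 r1z; apply: NNPP => r1n.
have [p0 [p0z _ mp]] := @argmax _ (msupp z) (fun _ => True) plength
  (ex_intro2 _ _ r1 r1z Logic.I).
have lp0 : (0 < plength p0)%N.
  by have := mp r1 r1z Logic.I; lia.
have zp0 : z@_p0 != 0 by rewrite mcoeff_neq0.
have ep0 : pend p0 = i by apply: ez.
have sp0 : pstart p0 = i by apply: sz.
case: (classic (exists2 q, q \in msupp y & pstart q = i)) => [hq|nq]; last first.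
  have yp0 : y@_p0 = 0.
    by apply/eqP; rewrite mcoeff_eq0; apply/negP => h; apply: nq; exists p0.
  have : (pm z y)@_p0 = 0.
    rewrite mcoeff_pm; apply: big1_seq => p /andP [_ pz]; apply: big1_seq => q /andP [_ qy].
    case: eqP => [epq|]; last by rewrite mulr0.
    by exfalso; apply: nq; exists q => //; rewrite -epq ez.
  by rewrite -Eq yp0 addr0; apply/eqP.
have [q0 [q0y sq0 mq]] := @argmax _ (msupp y) (fun q => pstart q = i) plength hq.
have e0 : pend p0 = pstart q0 by rewrite ep0 sq0.
set R := pcat p0 q0.
have cR : (pm z y)@_R = z@_p0 * y@_q0.
  rewrite KEY // => p q pz qy epq _; split; first exact: mp.
  by apply: mq => //; rewrite -epq ez.
have yq0 : y@_q0 != 0 by rewrite mcoeff_neq0.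
have yR : y@_R = 0.
  apply/eqP; rewrite mcoeff_eq0; apply/negP => h.
  have := mq R h; rewrite /R pstart_cat // plength_cat // sp0 => /(_ erefl).
  by rewrite -{2}[plength q0]add0n leq_add2r leqn0 => /eqP hl; rewrite hl in lp0.
case: (posnP (plength q0)) => lq0.
  have eq0 : q0 = e by rewrite (plength0 lq0) sq0.
  have eR : R = p0 by rewrite /R eq0 /e -ep0 pcat_triv_r.
  have ye : y@_e = 1.
    have := Eq R; rewrite cR yR addr0 eR -eq0 => /eqP.
    rewrite -subr_eq0 -{1}[z@_p0]mulr1 -mulrBr mulf_eq0 (negbTE zp0) /=.
    by rewrite subr_eq0 => /eqP <-.
  have := Eq e; rewrite coef_triv ye mulr1 => /eqP.
  by rewrite -subr_eq0 addrC addKr oner_eq0.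
have zR : z@_R = 0.
  apply/eqP; rewrite mcoeff_eq0; apply/negP => h.
  have := mp R h Logic.I; rewrite /R plength_cat //.
  by rewrite -{2}[plength p0]addn0 leq_add2l leqn0 => /eqP hl; rewrite hl in lq0.
have := Eq R; rewrite zR yR addr0 cR => /eqP; rewrite eq_sym mulf_eq0.
by rewrite (negbTE zp0) (negbTE yq0).
Qed.

Lemma bad_of (x : A) : ~ kR x ->
  exists p q, [/\ p \in msupp x, pstart q = pend p & pend q = pstart p].
Proof.
move=> nk; apply: NNPP => h; apply: nk => p px; apply: NNPP => np.
have [q [e1 e2]] := nonreg np; apply: h; exists p, q; by split.
Qed.

Definition W (x : A) (p q : qpath) (c : k) :=
  pm (pm (B 1 (triv (pstart p))) x) (B c q).

Lemma W_ideal (S : A -> Prop) x p q c : rideal pm S -> S x -> S (W x p q c).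
Proof.
case=> _ _ hm Sx; rewrite /W.
exact: (hm (B c q) _ (hm (B 1 (triv (pstart p))) x Sx).1).2.
Qed.

Lemma W_starts x p q c : startsAt (W x p q c) (pstart p).
Proof. by apply: starts_pm; apply: starts_pm; apply: startsB. Qed.

Lemma W_ends x p q c : pend q = pstart p -> endsAt (W x p q c) (pstart p).
Proof. by move=> e; apply: ends_pm; rewrite -e; apply: endsB. Qed.

Lemma W_coef x p q c : pstart q = pend p -> (W x p q c)@_(pcat p q) = x@_p * c.
Proof.
move=> e; rewrite /W COEFF_R //.
have := @COEFF_L 1 (triv (pstart p)) p x erefl; rewrite pcat_triv_l => ->.
by rewrite mul1r.
Qed.

Lemma W_neq0 x p q : p \in msupp x -> pstart q = pend p -> W x p q 1 != 0.
Proof.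
move=> px e; apply/eqP => /(congr1 (mcoeff (pcat p q))); rewrite W_coef //.
by rewrite mulr1 mcoeff0 => /eqP; rewrite mcoeff_eq0 px.
Qed.

Lemma POW (w : A) i n : w != 0 -> startsAt w i -> endsAt w i ->
  forall y : A, y != 0 -> endsAt y i -> foldl pm y (nseq n w) != 0.
Proof.
move=> wn sw ew; elim: n => [//|n ih] y yn ey /=.
apply: ih; first exact: (TWO yn wn ey sw).
exact: ends_pm ew.
Qed.

Lemma rk_kR (x : A) : r_k pm x -> kR x.
Proof.
move=> [S [Sid Snil Sx]]; apply: NNPP => nk.
have [p [q [px sq eq]]] := bad_of nk.
have Sw := W_ideal p q 1 Sid Sx.
have wn := W_neq0 px sq.
have [n hn] := Snil _ Sw.
have := POW n wn (@W_starts x p q 1) (@W_ends x p q 1 eq) wn (@W_ends x p q 1 eq).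
by rewrite /rprod in hn; rewrite hn eqxx.
Qed.

Lemma rl_kR (x : A) : r_l pm x -> kR x.
Proof.
move=> [S [Sid Sln Sx]]; apply: NNPP => nk.
have [p [q [px sq eq]]] := bad_of nk.
set w := W x p q 1.
have Sw : S w := W_ideal p q 1 Sid Sx.
have wn : w != 0 := W_neq0 px sq.
have hF : forall y, y \in [:: w] -> S y by move=> y; rewrite inE => /eqP ->.
have [n hn] := Sln [:: w] hF.
have hl : forall y, y \in nseq n w -> y \in [:: w].
  by move=> y; rewrite mem_nseq => /andP [_ /eqP ->]; rewrite mem_head.
have h := hn w (nseq n w) (mem_head _ _) (size_nseq _ _) hl.
rewrite /rprod in h.
have := POW n wn (@W_starts x p q 1) (@W_ends x p q 1 eq) wn (@W_ends x p q 1 eq).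
by rewrite h eqxx.
Qed.

Lemma rj_kR (x : A) : r_j pm x -> kR x.
Proof.
move=> [S [Sid Sqr Sx]]; apply: NNPP => nk.
have [p [q [px sq eq]]] := bad_of nk.
have G c : (forall r, r \in msupp (W x p q c) -> plength r = 0%N) /\
           (W x p q c)@_(triv (pstart p)) != 1.
  have [y hy] := Sqr _ (W_ideal p q c Sid Sx).
  exact: Glem (@W_starts x p q c) (@W_ends x p q c eq) hy.
have xp : x@_p != 0 by rewrite mcoeff_neq0.
have e : pend p = pstart q by [].
case: (posnP (plength (pcat p q))) => lpq; last first.
  have [h _] := G 1; have : pcat p q \in msupp (W x p q 1).
    by rewrite -mcoeff_neq0 W_coef // mulr1.
  by move/h => h0; rewrite h0 in lpq.
have ept : pcat p q = triv (pstart p) by rewrite (plength0 lpq) pstart_cat.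
have [_ h] := G (x@_p)^-1; move: h; rewrite -ept W_coef // divff //.
by rewrite eqxx.
Qed.

Definition inC (i v : I) := reach i v /\ reach v i.
Definition Qc (i : I) (r : qpath) := inC i (pstart r) /\ inC i (pend r).
Definition PC (i : I) (y : A) := forall r, r \in msupp y -> ~ Qc i r.

Lemma Qc_cat i p s : pend p = pstart s -> Qc i (pcat p s) -> Qc i p /\ Qc i s.
Proof.
move=> e; rewrite /Qc pstart_cat // pend_cat // => -[[h1 h2] [h3 h4]].
have m1 : reach i (pend p) by apply: reach_trans h1 (reachP p).
have m2 : reach (pend p) i by rewrite e; apply: reach_trans (reachP s) h4.
by split; split=> //; split => //; rewrite -e.
Qed.

Lemma PC_ideal i : rideal pm (PC i).
Proof.
split.
- by move=> r; rewrite msupp0.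
- move=> x y hx hy r /(fsubsetP (msuppB_le x y)); rewrite in_fsetU.
  by case/orP; [apply: hx | apply: hy].
- move=> a x hx; split.
    move=> r /msupp_pm [p [q [_ qx e ->]]] /(Qc_cat e) [_]; exact: hx.
  move=> r /msupp_pm [p [q [px _ e ->]]] /(Qc_cat e) [+ _]; exact: hx.
Qed.

Lemma PC_prime_prop i (U V : A -> Prop) : rideal pm U -> rideal pm V ->
  (forall a b, U a -> V b -> PC i (pm a b)) ->
  (forall a, U a -> PC i a) \/ (forall b, V b -> PC i b).
Proof.
move=> Uid [_ _ Vm] h; apply: NNPP => hn.
have [a [Ua na]] : exists a, U a /\ ~ PC i a.
  apply: NNPP => h1; apply: hn; left => a Ua; apply: NNPP => h2; apply: h1; by exists a.
have [b [Vb nb]] : exists b, V b /\ ~ PC i b.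
  apply: NNPP => h1; apply: hn; right => b Vb; apply: NNPP => h2; apply: h1; by exists b.
have [r1 [r1a Qr1]] : exists r, r \in msupp a /\ Qc i r.
  apply: NNPP => h1; apply: na => r ra Qr; apply: h1; by exists r.
have [r2 [r2b Qr2]] : exists r, r \in msupp b /\ Qc i r.
  apply: NNPP => h1; apply: nb => r rb Qr; apply: h1; by exists r.
have [p0 [p0a Qp0 mp]] := @argmax _ (msupp a) (Qc i) plength (ex_intro2 _ _ r1 r1a Qr1).
have [q0 [q0b Qq0 mq]] := @argmax _ (msupp b) (Qc i) plength (ex_intro2 _ _ r2 r2b Qr2).
have [c [sc ec]] : reach (pend p0) (pstart q0).
  by apply: reach_trans (Qp0.2.2) (Qq0.1.1).
set b' := pm (B 1 c) b.
have Vb' : V b' := (Vm (B 1 c) b Vb).1.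
have e1 : pend c = pstart q0 by [].
have e2 : pend p0 = pstart (pcat c q0) by rewrite pstart_cat.
set R := pcat p0 (pcat c q0).
have QR : Qc i R.
  by rewrite /Qc /R pstart_cat // pend_cat // pend_cat //; split; [exact: Qp0.1 | exact: Qq0.2].
have cR : (pm a b')@_R = a@_p0 * b@_q0.
  rewrite KEY // ?COEFF_L // ?mul1r //.
  move=> p s pa sb' eps eR; have [Qp Qs] : Qc i p /\ Qc i s by apply: (@Qc_cat i p s eps); rewrite eR.
  split; first exact: mp.
  move: sb' Qs; rewrite /b' => /msupp_pm [c' [q [/in_msuppB -> qb ecq ->]]].
  move=> /(Qc_cat ecq) [_ Qq]; rewrite !plength_cat // leq_add2l.
  exact: mq.
have : R \in msupp (pm a b').
  by rewrite -mcoeff_neq0 cR mulf_neq0 // mcoeff_neq0.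
by move/(h a b' Ua Vb').
Qed.

Lemma rb_kR (x : A) : r_b pm x -> kR x.
Proof.
move=> hb; apply: NNPP => nk.
have [p [q [px sq eq]]] := bad_of nk.
have Pp : rprime pm (PC (pstart p)).
  split; [exact: PC_ideal | exists x | exact: PC_prime_prop].
  move=> h; apply: (h p px); split; split.
  - exact: reach_refl.
  - exact: reach_refl.
  - exact: reachP.
  - by exists q.
have := hb _ Pp p px; apply; split; split.
- exact: reach_refl.
- exact: reach_refl.
- exact: reachP.
- by exists q.
Qed.

Definition occ (p r : qpath) := exists u w,
  [/\ pend u = pstart p, pend p = pstart w & r = pcat (pcat u p) w].

Lemma occ_refl p : occ p p.
Proof.
exists (triv (pstart p)), (triv (pend p)); split=> //.
by rewrite pcat_triv_l pcat_triv_r.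
Qed.

Lemma pend3 u p w : pend u = pstart p -> pend p = pstart w ->
  pend (pcat (pcat u p) w) = pend w.
Proof. by move=> e1 e2; rewrite pend_cat // pend_cat. Qed.

Lemma pstart3 u p w : pend u = pstart p -> pend p = pstart w ->
  pstart (pcat (pcat u p) w) = pstart u.
Proof. by move=> e1 e2; rewrite pstart_cat ?pstart_cat // pend_cat. Qed.

Lemma occ_catl p r1 r2 : occ p r1 -> pend r1 = pstart r2 -> occ p (pcat r1 r2).
Proof.
move=> [u [w [e1 e2 ->]]]; rewrite pend3 // => e3.
exists u, (pcat w r2); split=> //; first by rewrite pstart_cat.
by rewrite pcat_assoc // pend_cat.
Qed.

Lemma occ_catr p r1 r2 : occ p r2 -> pend r1 = pstart r2 -> occ p (pcat r1 r2).
Proof.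
move=> [u [w [e1 e2 ->]]]; rewrite pstart3 // => e3.
exists (pcat r1 u), w; split=> //; first by rewrite pend_cat.
rewrite -pcat_assoc; last by rewrite pend_cat.
  by rewrite -pcat_assoc.
by rewrite pstart_cat.
Qed.

Lemma occ_disj p r1 r2 : regular_path p -> occ p r1 -> occ p r2 ->
  pend r1 = pstart r2 -> False.
Proof.
move=> [_ np] [u [w [e1 e2 ->]]] [u' [w' [e1' e2' ->]]].
rewrite pend3 // pstart3 // => e.
apply: np; exists (pcat w u'); rewrite pstart_cat // pend_cat //.
Qed.

Definition H (F : {fset qpath}) (m : nat) (y : A) :=
  forall r, r \in msupp y -> exists s : seq qpath,
    [/\ uniq s, (m <= size s)%N & forall p, p \in s -> p \in F /\ occ p r].

Lemma H0 F y : H F 0 y.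
Proof. by move=> r _; exists [::]. Qed.

Lemma Hz F m : H F m 0.
Proof. by move=> r; rewrite msupp0. Qed.

Lemma HB F m x y : H F m x -> H F m y -> H F m (x - y).
Proof.
move=> hx hy r /(fsubsetP (msuppB_le x y)); rewrite in_fsetU.
by case/orP; [apply: hx | apply: hy].
Qed.

Lemma Hmul (F : {fset qpath}) m n a b : (forall p, p \in F -> regular_path p) ->
  H F m a -> H F n b -> H F (m + n) (pm a b).
Proof.
move=> regF ha hb r /msupp_pm [p [q [pa qb e ->]]].
have [s1 [u1 l1 m1]] := ha p pa; have [s2 [u2 l2 m2]] := hb q qb.
exists (s1 ++ s2); split.
- rewrite cat_uniq u1 u2 andbT /=; apply/hasPn => t ts2; apply/negP => ts1.
  have [tF o1] := m1 t ts1; have [_ o2] := m2 t ts2.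
  exact: occ_disj (regF t tF) o1 o2 e.
- by rewrite size_cat leq_add.
- move=> t; rewrite mem_cat => /orP [/m1 [tF o]|/m2 [tF o]]; split=> //.
    exact: occ_catl.
  exact: occ_catr.
Qed.

Lemma Hmono F m n y : (n <= m)%N -> H F m y -> H F n y.
Proof.
move=> nm hy r ry; have [s [u l ms]] := hy r ry.
exists (take n s); split; first exact: take_uniq.
  by rewrite size_take; case: ifP => // _; apply: leq_trans nm l.
by move=> p /mem_take /ms.
Qed.

Lemma Hbig (F : {fset qpath}) y : H F (size F).+1 y -> y = 0.
Proof.
move=> hy; apply/eqP; apply: contraT => yn.
have [r ry] := nz_msupp yn; have [s [u l ms]] := hy r ry.
have : (size s <= size F)%N.
  by apply: uniq_leq_size => // p /ms [].
by rewrite leqNgt l.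
Qed.

Lemma H_x (x : A) : H (msupp x) 1 x.
Proof.
move=> r rx; exists [:: r]; split=> // p; rewrite inE => /eqP ->.
by split=> //; apply: occ_refl.
Qed.

Lemma H_foldl (F : {fset qpath}) (l : seq A) : (forall p, p \in F -> regular_path p) ->
  forall m y, H F m y -> (forall z, z \in l -> H F 1 z) -> H F (m + size l) (foldl pm y l).
Proof.
move=> regF; elim: l => [|z l ih] m y hy hl /=; first by rewrite addn0.
have h1 : H F (m + 1) (pm y z) by apply: Hmul => //; apply: hl; rewrite inE eqxx.
have hl' : forall z', z' \in l -> H F 1 z' by move=> z' zl; apply: hl; rewrite inE zl orbT.
have := ih _ _ h1 hl'.
by rewrite -addnA add1n.
Qed.

Lemma H_ideal (F : {fset qpath}) : (forall p, p \in F -> regular_path p) ->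
  rideal pm (H F 1).
Proof.
move=> regF; split; [exact: Hz | exact: HB | move=> a y hy; split].
  by have := Hmul regF (@H0 F a) hy; rewrite add0n.
have := Hmul regF hy (@H0 F a); by rewrite addn0.
Qed.

Lemma H_nil (F : {fset qpath}) y l : (forall p, p \in F -> regular_path p) ->
  H F 1 y -> (forall z, z \in l -> H F 1 z) -> size l = size F -> rprod pm y l = 0.
Proof.
move=> regF hy hl sl; apply: (@Hbig F).
by have := H_foldl regF hy hl; rewrite sl add1n.
Qed.

Lemma kR_rk (x : A) : kR x -> r_k pm x.
Proof.
move=> hx; exists (H (msupp x) 1); split; [exact: H_ideal | | exact: H_x].
move=> y hy; exists (size (msupp x)); apply: (H_nil hx hy).
  by move=> z; rewrite mem_nseq => /andP [_ /eqP ->].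
by rewrite size_nseq.
Qed.

Lemma kR_rl (x : A) : kR x -> r_l pm x.
Proof.
move=> hx; exists (H (msupp x) 1); split; [exact: H_ideal | | exact: H_x].
move=> F' hF'; exists (size (msupp x)) => x0 l x0F sl lF.
apply: (H_nil hx); first exact: hF'.
  by move=> z /lF; apply: hF'.
done.
Qed.

Fixpoint pw (y : A) (n : nat) : A := if n is n'.+1 then pm y (pw y n') else y.

Lemma H_pw (F : {fset qpath}) y n : (forall p, p \in F -> regular_path p) ->
  H F 1 y -> H F n.+1 (pw y n).
Proof.
move=> regF hy; elim: n => [//|n ih] /=.
by have := Hmul regF hy ih; rewrite add1n.
Qed.

Lemma pw_tele (y : A) N :
  y - \sum_(0 <= k < N) pw y k + \sum_(0 <= k < N) pw y k.+1 = pw y N.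
Proof.
elim: N => [|N ih]; first by rewrite !big_nil subr0 addr0.
rewrite !big_nat_recr //=; exact: zid ih.
Qed.

Lemma kR_rj (x : A) : kR x -> r_j pm x.
Proof.
move=> hx; exists (H (msupp x) 1); split; [exact: H_ideal | | exact: H_x].
move=> y hy; set N := size (msupp x).
exists (- \sum_(0 <= k < N) pw y k).
rewrite pmNr pm_sumr opprK.
have -> : \sum_(0 <= k < N) pm y (pw y k) = \sum_(0 <= k < N) pw y k.+1 by [].
rewrite pw_tele; apply: (@Hbig (msupp x)); exact: H_pw.
Qed.

Lemma kR_rb (x : A) : kR x -> r_b pm x.
Proof.
move=> hx P [Pid _ Pp]; set F := msupp x.
have HI := H_ideal hx.
have step m : (0 < m)%N -> (forall y, H F m.+1 y -> P y) -> forall y, H F m y -> P y.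
  move=> m0 hm y hy.
  have hU : forall a b, H F 1 a -> H F m b -> P (pm a b).
    by move=> a b ha hb; apply: hm; have := Hmul hx ha hb; rewrite add1n.
  have HIm : rideal pm (H F m).
    split; [exact: Hz | exact: HB | move=> a z hz; split].
      by have := Hmul hx (@H0 F a) hz; rewrite add0n.
    by have := Hmul hx hz (@H0 F a); rewrite addn0.
  case: (Pp _ _ HI HIm hU) => h; last exact: h.
  by apply: h; apply: Hmono hy.
have base : forall y, H F (size F).+1 y -> P y.
  by move=> y /Hbig ->; case: Pid.
have gen d : (d <= size F)%N -> forall y, H F ((size F).+1 - d) y -> P y.
  elim: d => [|d ih] hd; first by rewrite subn0.
  apply: step; first by lia.
  have -> : ((size F).+1 - d.+1).+1 = ((size F).+1 - d)%N by lia.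
  by apply: ih; lia.
have := gen (size F) (leqnn _); rewrite subSnn; apply.
exact: H_x.
Qed.

Local Notation inA := (@Defs.inA k I Ar src tgt).
Local Notation gop := (@Defs.gop k I Ar src tgt).

Lemma gopE a g b : gop a g b = pm (pm a g) b.
Proof. by rewrite /gop pmE. Qed.

Lemma inA_B c p : inA (pstart p) (pend p) (B c p).
Proof. by move=> q /in_msuppB ->. Qed.

Lemma inA0 i j : inA i j 0.
Proof. by move=> p; rewrite msupp0. Qed.

Lemma inAB i j x y : inA i j x -> inA i j y -> inA i j (x - y).
Proof.
move=> hx hy r /(fsubsetP (msuppB_le x y)); rewrite in_fsetU.
by case/orP; [apply: hx | apply: hy].
Qed.

Lemma inA_s i j x : inA i j x -> startsAt x i.
Proof. by move=> h p /h []. Qed.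
Lemma inA_e i j x : inA i j x -> endsAt x j.
Proof. by move=> h p /h []. Qed.

Lemma inA_gop i j l l' a g b : inA i l a -> inA l' j b -> inA i j (gop a g b).
Proof.
move=> ha hb p pin; rewrite gopE in pin; split.
  by apply: (starts_pm (starts_pm (inA_s ha))) pin.
by apply: (ends_pm (inA_e hb)) pin.
Qed.

Lemma gamma_zero (g : A) i j : ~ reach j i -> inA j i g -> g = 0.
Proof.
move=> nr hg; apply/eqP; apply: contraT => gn.
have [p pg] := nz_msupp gn; have [e1 e2] := hg p pg.
by exfalso; apply: nr; exists p.
Qed.

Lemma gop0 a b : gop a 0 b = 0.
Proof. by rewrite gopE pm0r pm0l. Qed.

Lemma gideal_M i j : ~ reach j i -> gideal (inA i j) (inA j i) gop (inA i j).
Proof.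
move=> nr; split=> //; [exact: inA0 | exact: inAB |].
by move=> a g x _ /(gamma_zero nr) -> _; rewrite !gop0; split; apply: inA0.
Qed.

Lemma reg_rad r i j y : ~ reach j i -> inA i j y ->
  gamma_radical r (inA i j) (inA j i) gop y.
Proof.
move=> nr hy; have GM := gideal_M nr.
case: r => /=.
- split=> // P [[_ P0 _ _] [z [Mz nPz]] Pp].
  have h : forall a g b, inA i j a -> inA j i g -> inA i j b -> P (gop a g b).
    by move=> a g b _ /(gamma_zero nr) -> _; rewrite gop0.
  by exfalso; case: (Pp _ _ GM GM h) => /(_ z Mz).
- exists (inA i j); split=> //.
  move=> F Phi _ hPhi; exists 1%N => x0 l _.
  case: l => [|[g z] [|]] //= _ /(_ (g, z)); rewrite inE eqxx => /(_ isT) /andP [gP _].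
  by rewrite (gamma_zero nr (hPhi g gP)) gop0.
- exists (inA i j); split=> //.
  move=> x0 _; exists 1%N => gs; case: gs => [|g [|]] //= _ /(_ g).
  by rewrite inE eqxx => /(_ isT) /(gamma_zero nr) ->; rewrite gop0.
- exists (inA i j); split=> //.
  move=> x0 hx0 g /(gamma_zero nr) ->; exists (- x0); split.
    by rewrite -sub0r; apply: inAB => //; apply: inA0.
  by rewrite gop0 subr0 subrr.
Qed.

Lemma kR_sumrad r (x : A) : kR x -> sum_radAij r x.
Proof.
move=> hx; exists [seq ((pstart p, pend p), B x@_p p) | p <- msupp x]; split.
  move=> t /mapP [p px ->] /=; apply: reg_rad; last exact: inA_B.
  by have [_ h] := hx p px.
by rewrite big_map /=; apply: malgBE.
Qed.

Lemma rad_M r i j y : gamma_radical r (inA i j) (inA j i) gop y -> inA i j y.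
Proof.
case: r => /=; first by case.
- by case=> S [[hS _ _ _] _ Sy]; apply: hS.
- by case=> S [[hS _ _ _] _ Sy]; apply: hS.
- by case=> S [[hS _ _ _] _ Sy]; apply: hS.
Qed.

Lemma GP i j (y : A) q n : y != 0 -> inA i j y -> pstart q = j -> pend q = i ->
  forall z, z != 0 -> inA i j z -> gprod gop z (nseq n (B 1 q, y)) != 0.
Proof.
move=> yn hy sq eq; elim: n => [//|n ih] z zn hz.
rewrite /gprod /=; apply: ih; last first.
  by apply: (@inA_gop _ _ j i) hz hy.
have sB : startsAt (B 1 q) j by rewrite -sq; apply: startsB.
have eB : endsAt (B 1 q) i by rewrite -eq; apply: endsB.
have h1 : pm z (B 1 q) != 0.
  by apply: TWO zn _ (inA_e hz) sB; apply: B_neq0; rewrite oner_neq0.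
rewrite gopE; exact: TWO h1 yn (@ends_pm z _ _ eB) (inA_s hy).
Qed.

Lemma GOPNZ i j (a b : A) q : a != 0 -> inA i j a -> b != 0 -> inA i j b ->
  pstart q = j -> pend q = i -> gop a (B 1 q) b != 0.
Proof.
move=> an ha bn hb sq eq.
have sB : startsAt (B 1 q) j by rewrite -sq; apply: startsB.
have eB : endsAt (B 1 q) i by rewrite -eq; apply: endsB.
have h1 : pm a (B 1 q) != 0.
  by apply: TWO an _ (inA_e ha) sB; apply: B_neq0; rewrite oner_neq0.
rewrite gopE; exact: TWO h1 bn (@ends_pm a _ _ eB) (inA_s hb).
Qed.

Lemma rad_kR r i j y : gamma_radical r (inA i j) (inA j i) gop y -> kR y.
Proof.
move=> hr; have My := rad_M hr.
case: (classic (reach j i)) => [[q [sq eq]]|nr]; last first.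
  move=> p py; have [e1 e2] := My p py; split.
    rewrite lt0n; apply/eqP => /plength0 ep; apply: nr.
    by rewrite -e1 -e2 ep; exact: reach_refl.
  by rewrite e1 e2.
have Gq c : inA j i (B c q) by rewrite -sq -eq; apply: inA_B.
suff -> : y = 0 by exact: kR0.
apply: NNPP => /eqP yn.
case: r hr My => /= hr My.
- have P0 : gprime (inA i j) (inA j i) gop (fun t => t = 0).
    split.
    + split.
      * by move=> x ->; exact: inA0.
      * by [].
      * by move=> x z -> ->; rewrite subr0.
      * by move=> a g x _ _ ->; rewrite !gopE pm0r pm0l pm0l.
    + by exists y; split => //; apply/eqP.
    + move=> U V [hU _ _ _] [hV _ _ _] h; apply: NNPP => hn.
      have [a [Ua an]] : exists a, U a /\ a != 0.
        apply: NNPP => h1; apply: hn; left => a Ua; apply: NNPP => h2; apply: h1.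
        by exists a; split => //; apply/eqP.
      have [b [Vb bn]] : exists b, V b /\ b != 0.
        apply: NNPP => h1; apply: hn; right => b Vb; apply: NNPP => h2; apply: h1.
        by exists b; split => //; apply/eqP.
      have := h a (B 1 q) b Ua (Gq 1) Vb; apply/eqP.
      exact: GOPNZ an (hU _ Ua) bn (hV _ Vb) sq eq.
  by have [_ h] := hr; move: (h _ P0); apply/eqP.
- case: hr => S [[hS _ _ _] Sln Sy].
  have hF : forall z, z \in [:: y] -> S z by move=> z; rewrite inE => /eqP ->.
  have hP : forall g, g \in [:: B 1 q] -> inA j i g by move=> g; rewrite inE => /eqP ->.
  have [n hn] := Sln [:: y] [:: B 1 q] hF hP.
  have hl : forall gx, gx \in nseq n (B 1 q, y) ->
      (gx.1 \in [:: B 1 q]) && (gx.2 \in [:: y]).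
    by move=> gx; rewrite mem_nseq => /andP [_ /eqP ->]; rewrite /= !mem_head.
  have := hn y _ (mem_head _ _) (size_nseq _ _) hl; apply/eqP.
  exact: (@GP i j y q n yn My sq eq y yn My).
- case: hr => S [[hS _ _ _] Snil Sy].
  have [n hn] := Snil y Sy.
  have hg : forall g, g \in nseq n (B 1 q) -> inA j i g.
    by move=> g; rewrite mem_nseq => /andP [_ /eqP ->].
  have := hn _ (size_nseq _ _) hg; rewrite map_nseq; apply/eqP.
  exact: (@GP i j y q n yn My sq eq y yn My).
- case: hr => S [[hS _ _ _] Sqr Sy].
  have G c : (forall r, r \in msupp (pm y (B c q)) -> plength r = 0%N) /\
             (pm y (B c q))@_(triv i) != 1.
    have [y' [My' E]] := Sqr y Sy (B c q) (Gq c).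
    have E2 : pm y (B c q) + pm y' (B c q) - pm (pm y (B c q)) (pm y' (B c q)) = 0.
      have := congr1 (fun t => pm t (B c q)) E; rewrite /= pm0l pmBl pmDl gopE.
      by rewrite pm_assoc.
    apply: Glem E2; first exact: starts_pm (inA_s My).
    by apply: ends_pm; rewrite -eq; apply: endsB.
  have [p py] := nz_msupp yn; have [sp ep] := My p py.
  have yp : y@_p != 0 by rewrite mcoeff_neq0.
  have e : pend p = pstart q by rewrite ep sq.
  case: (posnP (plength (pcat p q))) => lpq; last first.
    have [h _] := G 1; have : pcat p q \in msupp (pm y (B 1 q)).
      by rewrite -mcoeff_neq0 COEFF_R // mulr1.
    by move/h => h0; rewrite h0 in lpq.
  have ept : pcat p q = triv i by rewrite (plength0 lpq) pstart_cat // sp.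
  have [_ h] := G (y@_p)^-1; move: h; rewrite -ept COEFF_R // divff //.
  by rewrite eqxx.
Qed.

Lemma sumrad_kR r (x : A) : sum_radAij r x -> kR x.
Proof.
move=> [s [hs ->]]; apply: kR_sum => t ts; exact: rad_kR (hs t ts).
Qed.

Lemma radA_iff r (x : A) : radA r x <-> kR x.
Proof.
rewrite /radA pmE; case: r => /=; split.
- exact: rb_kR.
- exact: kR_rb.
- exact: rl_kR.
- exact: kR_rl.
- exact: rk_kR.
- exact: kR_rk.
- exact: rj_kR.
- exact: kR_rj.
Qed.

Lemma gm_iff r (x : A) : gm (radA r) x <-> kR x.
Proof.
split.
  by case=> S [_ hS Sx]; apply/radA_iff; apply: hS.
move=> hx; exists kR; split=> //.
  split; first by rewrite pmE; exact: kR_ideal.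
  by move=> y i j hy; apply: kR_comp.
by move=> y /radA_iff.
Qed.

Lemma sum_iff r (x : A) : sum_radAij r x <-> kR x.
Proof. split; [exact: sumrad_kR | exact: kR_sumrad]. Qed.

End PA.

Theorem theorem3p3 (k : fieldType) (I Ar : choiceType) (src tgt : Ar -> I)
    (r : radkind) (x : pathalg k src tgt) :
  (radA r x <-> gm (radA r) x) /\
  (gm (radA r) x <-> sum_radAij r x) /\
  (sum_radAij r x <-> kR x).
Proof.
have h1 := radA_iff r x; have h2 := gm_iff r x; have h3 := sum_iff r x.
by split; [|split]; [rewrite h1 h2 | rewrite h2 h3 | exact: h3].
Qed.
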